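(* Let $G$ be a finite nilpotent group and let $V=\{1,v_1,v_2,v_3\}$ be a four-group acting on $G$ by automorphisms with $C_G(V)=1$. Put $G_i=C_G(v_i)$ for $i=1,2,3$. For $x\in G_i$ and $y\in G_j$ with $i\neq j$, let $k$ be such that $\{i,j,k\}=\{1,2,3\}$ and define $x*y=s$, where $(s,t)\in G_k\times G_j$ is the unique pair with $y^x=sts$. Define $R_1=\langle a*b : a\in G_2,b\in G_3\rangle$, $R_2=\langle a*b : a\in G_1,b\in G_3\rangle$, $R_3=\langle a*b : a\in G_1,b\in G_2\rangle$. Then $G_i\cap G'=R_i$ for $i=1,2,3$.
   Context: $G'$ is the derived subgroup of $G$. It is known that under these hypotheses $G$ has odd order, each $G_i$ is abelian, and for $x\in G_i$, $y\in G_j$ with $i\ne j$ the element $y^x$ is inverted by $v_i$, so there is a unique pair $(s,t)\in G_k\times G_j$ with $y^x=sts$; hence $x*y$ is well defined. *)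

(* Defs.v *)
From mathcomp Require Import all_boot all_fingroup all_solvable.
Set Implicit Arguments.
Unset Strict Implicit.
Unset Printing Implicit Defensive.
Local Open Scope group_scope.

(* x * y for x in G_i, y in G_j (i <> j), with {i,j,k} = {1,2,3}:
   the s in G_k such that y^x = s t s for some (unique) t in G_j.
   [star Gk Gj x y] picks such an s (default 1 if none exists; under
   the hypotheses of the paper the pair (s,t) exists and is unique). *)
Definition star (gT : finGroupType) (Gk Gj : {set gT}) (x y : gT) : gT :=
  odflt 1 [pick s in Gk | [exists t in Gj, y ^ x == s * t * s]].

Definition starGen (gT : finGroupType) (Gi Gj Gk : {set gT}) : {set gT} :=
  <<[set star Gk Gj a b | a in Gi, b in Gj]>>.

(* Main.v *)
Require Import Defs.
From mathcomp Require Import all_boot all_fingroup all_solvable.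
Set Implicit Arguments.
Unset Strict Implicit.
Unset Printing Implicit Defensive.
Local Open Scope group_scope.

Section Basic.
Variable gT : finGroupType.
Implicit Types (G H : {group gT}) (x y a b c : gT).

Lemma inC (A : {set gT}) a x : (x \in 'C_A[a]) = (x \in A) && (x ^ a == x).
Proof.
apply/subcent1P/andP => [[h1 h2]|[h1 h2]]; split => //.
  by rewrite conjg_fix commg1_sym; apply/commgP.
by rewrite conjg_fix commg1_sym in h2; apply/commgP.
Qed.

Lemma conjgKK x a : a ^+ 2 = 1 -> (x ^ a) ^ a = x.
Proof. by move=> h; rewrite -conjgM -expg2 h conjg1. Qed.

Definition ee G := (#|G|).+1./2.

Lemma sqrtE G p : odd #|G| -> p \in G -> (p ^+ ee G) ^+ 2 = p.
Proof.
move=> oG pG; rewrite -expgM.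
have -> : (ee G * 2 = #|G|.+1)%N.
  by rewrite /ee muln2 halfK /= oG subn0.
by rewrite expgSr expg_cardG // mul1g.
Qed.

Lemma sqrtE' G p : odd #|G| -> p \in G -> (p ^+ 2) ^+ ee G = p.
Proof. by move=> oG pG; rewrite -expgM mulnC expgM sqrtE. Qed.

Lemma sqrt_inj G s t : odd #|G| -> s \in G -> t \in G -> s ^+ 2 = t ^+ 2 -> s = t.
Proof. by move=> oG sG tG h; rewrite -(sqrtE' oG sG) h sqrtE'. Qed.

Lemma conjinv1 G d u : odd #|G| -> u \in G -> d \in G -> d ^ u = d^-1 -> d = 1.
Proof.
move=> oG uG dG h.
have h2 : u ^+ 2 \in 'C[d].
  apply/cent1P/commgP; rewrite commg1_sym -conjg_fix.
  by rewrite expg2 conjgM h conjVg h invgK.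
have h3 : d ^ u = d.
  rewrite -(sqrtE' oG uG); apply/conjg_fixP; rewrite commg1_sym.
  by apply/commgP/cent1P; apply: groupX.
have : d ^+ 2 = 1 ^+ 2 by rewrite expg2 -{1}h3 h mulVg expg1n.
by move/(sqrt_inj oG dG (group1 G)).
Qed.

Definition trip (G : {group gT}) a b c :=
  [/\ odd #|G|, [&& a \in 'N(G), b \in 'N(G) & c \in 'N(G)],
      [/\ a * b = c, b * a = c & a * c = b] /\ [/\ c * a = b, b * c = a & c * b = a],
      [/\ a ^+ 2 = 1, b ^+ 2 = 1 & c ^+ 2 = 1]
    & [/\ 'C_G[a] :&: 'C_G[b] = 1, 'C_G[a] :&: 'C_G[c] = 1
        & 'C_G[b] :&: 'C_G[c] = 1]].

Lemma trip_ba G a b c : trip G a b c -> trip G b a c.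
Proof.
case=> oG /and3P[na nb nc] [[? ? ?] [? ? ?]] [? ? ?] [i1 i2 i3].
by split => //; rewrite ?na ?nb ?nc //; repeat split; rewrite // setIC.
Qed.

Lemma trip_acb G a b c : trip G a b c -> trip G a c b.
Proof.
case=> oG /and3P[na nb nc] [[? ? ?] [? ? ?]] [? ? ?] [i1 i2 i3].
by split => //; rewrite ?na ?nb ?nc //; repeat split; rewrite // setIC.
Qed.

Lemma trip_odd G a b c : trip G a b c -> odd #|G|.
Proof. by case. Qed.

Lemma trip_inv G a b c x : trip G a b c -> x \in 'C_G[a] -> x ^ b = x^-1.
Proof.
case=> oG /and3P[nA nB nC] [[ab ba ac] [ca bc cb]] [a2 b2 c2] [Iab Iac Ibc] xC.
set C := 'C_G[a] in xC *.
have fC : forall h, h \in C -> h ^ b \in C.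
  move=> h; rewrite !inC => /andP[hG /eqP ha]; rewrite memJ_norm // hG /=.
  by rewrite -conjgM ba -ab conjgM ha.
pose f := fun h => h^-1 * h ^ b.
have fCC : forall h, h \in C -> f h \in C by move=> h hC; rewrite groupM ?groupV ?fC.
have finj : {in C &, injective f}.
  move=> h g hC gC /= E.
  have hG : h \in G by move: hC; rewrite inC => /andP[].
  have gG : g \in G by move: gC; rewrite inC => /andP[].
  have E2 : g * h^-1 = g ^ b * (h ^ b)^-1.
    apply: (mulIg (h ^ b)); rewrite mulgKV -mulgA.
    by apply: (mulgI g^-1); rewrite mulKg.
  have : g * h^-1 \in C :&: 'C_G[b].
    rewrite inE groupM ?groupV //= inC groupM ?groupV //=.
    by rewrite conjMg conjVg -E2.
  by rewrite Iab inE -eq_mulgV1 => /eqP.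
have im : f @: C = C.
  apply/eqP; rewrite eqEcard card_in_imset // leqnn andbT.
  by apply/subsetP => _ /imsetP[h hC ->]; exact: fCC h hC.
move: xC; rewrite -im => /imsetP[h hC ->].
by rewrite /f /= conjMg conjVg (conjgKK h b2) [RHS]invMg invgK.
Qed.

Lemma trip_ab G a b c : trip G a b c -> abelian 'C_G[a].
Proof.
move=> T; apply/centsP => x xC y yC.
have : (x * y) ^ b = (x * y)^-1 by apply: (trip_inv T); rewrite groupM.
rewrite conjMg (trip_inv T xC) (trip_inv T yC) invMg => E.
by move/(congr1 invg): E; rewrite !invMg !invgK.
Qed.

Lemma fixdec G (H : {group gT}) a x : odd #|G| -> H \subset G -> a \in 'N(H) ->
  a ^+ 2 = 1 -> x \in H -> (x ^ a * x^-1) ^+ ee G * x \in 'C_H[a].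
Proof.
move=> oG sHG nHa a2 xH.
set p := x ^ a * x^-1.
have pH : p \in H by rewrite groupM ?groupV ?memJ_norm.
have pa : p ^ a = p^-1.
  rewrite /p conjMg conjVg (conjgKK x a2).
  by rewrite [RHS]invMg invgK.
set q := p ^+ ee G.
have qa : q ^ a = q^-1 by rewrite /q conjXg pa expVgn.
have q2 : q ^+ 2 = p by apply: (sqrtE oG); apply: (subsetP sHG).
rewrite inC groupM ?groupX //= conjMg qa.
apply/eqP.
have -> : x ^ a = q ^+ 2 * x by rewrite q2 /p mulgKV.
by rewrite expg2 -!mulgA mulKg.
Qed.

Lemma trip_exist G (H : {group gT}) a b c w : trip G a b c -> H \subset G ->
  a \in 'N(H) -> b \in 'N(H) -> w \in H -> w ^ a = w^-1 ->
  exists2 s, s \in 'C_H[c] & exists2 t, t \in 'C_H[b] & w = s * t * s.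
Proof.
move=> T sHG naH nbH wH wa.
have T' := T; case: T' => oG _ [[ab ba ac] [ca bc cb]] [a2 b2 c2] _.
set u := w ^ b.
have uH : u \in H by rewrite memJ_norm.
have wc : w ^ c = u^-1 by rewrite -ab conjgM wa conjVg.
have uc : u ^ c = w^-1 by rewrite /u -conjgM bc.
set p := w * u.
have pH : p \in H by rewrite groupM.
have pc : p ^ c = p^-1 by rewrite /p conjMg wc uc [RHS]invMg.
set q := p ^+ ee G.
have qc : q ^ c = q^-1 by rewrite /q conjXg pc expVgn.
have q2 : q ^+ 2 = p by apply: (sqrtE oG); apply: (subsetP sHG).
have qH : q \in H by rewrite groupX.
set r := q * u^-1.
have rH : r \in H by rewrite groupM ?groupV.
have rc : r ^ c = r.
  rewrite /r conjMg conjVg qc uc invgK.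
  apply: (mulgI q); rewrite mulKVg mulgA -expg2 q2 /p mulgK //.
have rC : r \in 'C_H[c] by rewrite inC rH rc eqxx.
set s := r ^+ ee G.
have sC : s \in 'C_H[c] by rewrite groupX.
have s2 : s ^+ 2 = r by apply: (sqrtE oG); apply: (subsetP sHG).
have sCG : s \in 'C_G[c].
  by move: sC; rewrite !inC => /andP[/(subsetP sHG) -> ->].
have sb : s ^ b = s^-1 by apply: (trip_inv (trip_acb (trip_ba (trip_acb T)))).
have sH : s \in H by move: sC; rewrite inC => /andP[].
exists s => //; exists (s^-1 * w * s^-1); last first.
  by rewrite !mulgA mulgV mul1g mulgKV.
rewrite inC !groupM ?groupV //= !conjMg conjVg sb invgK -/u.
apply/eqP; apply: (mulgI s); apply: (mulIg s).
clearbody u; rewrite !mulgA mulgV mul1g mulgKV.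
have -> : (s * s * u * s * s = r * u * r :> gT) by rewrite -s2 expg2 !mulgA.
by rewrite /r mulgKV mulgA -expg2 q2 /p mulgK.
Qed.

Lemma trip_cinv G a b c x : trip G a b c -> x \in 'C_G[c] -> x ^ b = x^-1.
Proof. by move=> T; apply: (trip_inv (trip_acb (trip_ba (trip_acb T)))). Qed.

Lemma sts_b G a b c s t : trip G a b c -> s \in 'C_G[c] -> t \in 'C_G[b] ->
  s ^+ 2 * (s * t * s) ^ b * s ^+ 2 = s * t * s.
Proof.
move=> T sC tC.
have tb : t ^ b = t by move: tC; rewrite inC => /andP[_ /eqP].
rewrite !conjMg (trip_cinv T sC) tb expg2.
by rewrite !mulgA mulgK mulgKV.
Qed.

Lemma CinG G a x : x \in 'C_G[a] -> x \in G.
Proof. by rewrite inC => /andP[]. Qed.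

Lemma trip_uniq G a b c s t s' t' : trip G a b c -> s \in 'C_G[c] -> s' \in 'C_G[c] ->
  t \in 'C_G[b] -> t' \in 'C_G[b] -> s * t * s = s' * t' * s' -> s = s'.
Proof.
move=> T sC sC' tC tC' E0.
have oG := trip_odd T.
have abC := trip_ab (trip_acb (trip_ba (trip_acb T))).
set u := (s * t * s) ^ b.
have uG : u \in G.
  case: T => _ /and3P[_ nb _] _ _ _.
  by rewrite memJ_norm // !groupM // ?(CinG sC) ?(CinG tC).
have E1 := sts_b T sC tC; have E2 := sts_b T sC' tC'.
rewrite -E0 -/u in E2; rewrite -/u in E1.
set r := s ^+ 2 in E1; set r' := s' ^+ 2 in E2.
have rC : r \in 'C_G[c] by rewrite groupX.
have rC' : r' \in 'C_G[c] by rewrite groupX.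
have E : r * u * r = r' * u * r' by rewrite E1 E2.
have Er : r = s ^+ 2 by []. have Er' : r' = s' ^+ 2 by [].
clearbody u r r'.
set d := r'^-1 * r.
have dC : d \in 'C_G[c] by rewrite groupM ?groupV.
have rr : r = r' * d by rewrite /d mulKVg.
have cd : r' * d = d * r' := centsP abC _ rC' _ dC.
clearbody d.
have dE : d * u * d = u.
  move: E; rewrite rr {2}cd -!mulgA => /mulgI.
  by rewrite !mulgA => /mulIg.
have dJ : d ^ u = d^-1.
  rewrite /conjg; apply: (mulgI u); rewrite mulKVg.
  by rewrite -{2}dE mulgK.
have d1 : d = 1 := conjinv1 oG uG (CinG dC) dJ.
move: rr; rewrite d1 mulg1 Er Er' => r2.
exact: (sqrt_inj oG (CinG sC) (CinG sC') r2).
Qed.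

Lemma star_eq G a b c x y s t : trip G a b c -> s \in 'C_G[c] -> t \in 'C_G[b] ->
  y ^ x = s * t * s -> star 'C_G[c] 'C_G[b] x y = s.
Proof.
move=> T sC tC E; rewrite /star; case: pickP => [s' | H] /=.
  case/andP => s'C /existsP[t' /andP[t'C /eqP E']].
  by apply: (trip_uniq T s'C sC t'C tC); rewrite -E' E.
move/negbT/negP: (H s); case; rewrite sC /=; apply/existsP; exists t.
by rewrite tC E eqxx.
Qed.

Lemma star_in G b c x y : star 'C_G[c] 'C_G[b] x y \in 'C_G[c].
Proof. by rewrite /star; case: pickP => [s /andP[]|] //= _; rewrite group1. Qed.

Lemma trip_gen G (H : {group gT}) a b c : trip G a b c -> H \subset G ->
  a \in 'N(H) -> b \in 'N(H) -> H \subset <<'C_H[a] :|: 'C_H[b] :|: 'C_H[c]>>.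
Proof.
move=> T sHG naH nbH; apply/subsetP => g gH.
have T' := T; case: T' => oG _ _ [a2 b2 c2] _.
have ccC := fixdec oG sHG naH a2 gH.
set p := g ^ a * g^-1 in ccC; set q := p ^+ ee G in ccC.
have q2 : q ^+ 2 = p.
  by apply: (sqrtE oG); apply: (subsetP sHG); rewrite groupM ?groupV ?memJ_norm.
set cc := q * g in ccC.
have ccH : cc \in H by move: ccC; rewrite inC => /andP[].
have cca : cc ^ a = cc by move: ccC; rewrite inC => /andP[_ /eqP].
set w := cc^-1 * g.
have wH : w \in H by rewrite groupM ?groupV.
have wa : w ^ a = w^-1.
  rewrite /w conjMg conjVg cca [RHS]invMg invgK.
  rewrite /cc invMg -!mulgA; congr (_ * _).
  apply: (mulgI q); rewrite mulKVg mulgA -expg2 q2 /p mulgKV //.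
have [s sC [t tC wE]] := trip_exist T sHG naH nbH wH wa.
have -> : g = cc * (s * t * s) by rewrite -wE /w mulKVg.
clearbody cc.
rewrite !groupM ?mem_gen //.
- by rewrite !in_setU ccC.
- by rewrite !in_setU sC !orbT.
- by rewrite !in_setU tC !orbT.
- by rewrite !in_setU sC !orbT.
Qed.

Lemma cfix x y : x \in 'C[y] -> x ^ y = x.
Proof. by move/cent1P => h; rewrite conjgE h mulKg. Qed.

Lemma comm_inv_l (m g : gT) : [~ m, g] \in 'C[m] -> [~ m^-1, g] = [~ m, g]^-1.
Proof.
move=> h; have := commMgJ m^-1 m g; rewrite mulVg comm1g => E.
have E2 : [~ m^-1, g] ^ m = [~ m, g]^-1.
  by apply: (mulIg [~ m, g]); rewrite -E mulVg.
rewrite -[LHS](conjgK m) E2 cfix // groupV; apply/cent1P; apply: commuteV; exact/cent1P.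
Qed.

Lemma comm_inv_r (m g : gT) : [~ m, g] \in 'C[g] -> [~ m, g^-1] = [~ m, g]^-1.
Proof.
move=> h; have := commgMJ m g^-1 g; rewrite mulVg commg1 => E.
have E2 : [~ m, g^-1] ^ g = [~ m, g]^-1.
  by apply: (mulgI [~ m, g]); rewrite -E mulgV.
rewrite -[LHS](conjgK g) E2 cfix // groupV; apply/cent1P; apply: commuteV; exact/cent1P.
Qed.

Lemma star_comm G a b c x y : trip G a b c -> x \in 'C_G[a] -> y \in 'C_G[b] ->
  [~ y, x] \in 'C_G[c] -> [~ y, x] \in 'C(G) ->
  [~ y, x] \in starGen 'C_G[a] 'C_G[b] 'C_G[c].
Proof.
move=> T xC yC kC kZ.
have oG := trip_odd T.
set k := [~ y, x] in kC kZ *.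
set s := k ^+ ee G.
have sC : s \in 'C_G[c] by rewrite groupX.
have s2 : s ^+ 2 = k by apply: (sqrtE oG); apply: CinG kC.
have sZ : s \in 'C(G) by rewrite groupX.
have E : y ^ x = s * y * s.
  have := centP sZ y (CinG yC); rewrite /commute => ->.
  by rewrite conjg_mulR -mulgA -expg2 s2.
have st := star_eq T sC yC E.
rewrite -s2 groupX // -st; apply: mem_gen; exact: imset2_f.
Qed.

Lemma trip_base G (M N : {group gT}) a b c : trip G a b c -> M \subset G ->
  a \in 'N(M) -> b \in 'N(M) -> (N : {set gT}) = [~: M, G] -> N \subset 'C(G) ->
  N :&: 'C_G[c] \subset starGen 'C_G[a] 'C_G[b] 'C_G[c].
Proof.
move=> T sMG naM nbM defN cNG.
have T' := T; case: T' => oG /and3P[naG nbG ncG] [[ab ba ac] [ca bc cb]] [a2 b2 c2] _.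
set R := starGen _ _ _.
have ncM : c \in 'N(M) by rewrite -ab groupM.
have sNG : N \subset G by rewrite defN commg_subr; apply: subset_trans sMG (normG G).
have ncN : c \in 'N(N) by rewrite -sub1set defN normsR // sub1set.
have NC x y : x \in N -> y \in G -> commute x y.
  by move=> xN yG; exact: (centP (subsetP cNG x xN) y yG).
have NG x : x \in N -> x \in G by move/(subsetP sNG).
set S := [set n in N | n * n ^ c \in R].
have gS : group_set S.
  apply/group_setP; split.
    by rewrite inE group1 conj1g mulg1 group1.
  move=> x y; rewrite !inE => /andP[xN xR] /andP[yN yR].
  rewrite groupM //= conjMg.
  have xcN : x ^ c \in N by rewrite memJ_norm.
  set xc := x ^ c in xR xcN *; set yc := y ^ c in yR *; clearbody xc yc.
  have -> : x * y * (xc * yc) = x * xc * (y * yc).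
    rewrite -!mulgA; congr (_ * _); rewrite !mulgA; congr (_ * _).
    exact: NC yN (NG _ xcN).
  by rewrite groupM.
pose SG := Group gS.
have SM : forall x y, x \in S -> y \in S -> x * y \in S := fun x y => @groupM _ SG x y.
have S1 : 1 \in S := group1 SG.
have Sdef n : (n \in S) = (n \in N) && (n * n ^ c \in R) by rewrite inE.
clearbody S.
have invAc x : x \in 'C_G[a] -> x ^ c = x^-1 := trip_inv (trip_acb T).
have invBc x : x \in 'C_G[b] -> x ^ c = x^-1 := trip_inv (trip_acb (trip_ba T)).
have fixC x : x \in 'C_G[c] -> x ^ c = x by rewrite inC => /andP[_ /eqP].
have abA := trip_ab T; have abB := trip_ab (trip_ba T).
have abC := trip_ab (trip_ba (trip_acb T)).
have piece m g : m \in M -> m \in 'C_G[a] :|: 'C_G[b] :|: 'C_G[c] ->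
    g \in 'C_G[a] :|: 'C_G[b] :|: 'C_G[c] -> [~ m, g] \in S.
  move=> mM mU gU.
  have mG : m \in G by apply: (subsetP sMG).
  have gG : g \in G by move: gU; rewrite !in_setU => /orP[/orP[]|]; apply: CinG.
  have kN : [~ m, g] \in N by rewrite defN mem_commg.
  have kZ : [~ m, g] \in 'C(G) := subsetP cNG _ kN.
  have kCm : [~ m, g] \in 'C[m] by apply/cent1P; exact: NC.
  have kCg : [~ m, g] \in 'C[g] by apply/cent1P; exact: NC.
  have kVm := comm_inv_l kCm; have kVg := comm_inv_r kCg.
  have kVV : [~ m^-1, g^-1] = [~ m, g].
    have h : [~ m^-1, g] \in 'C[g] by rewrite kVm groupV.
    by rewrite (comm_inv_r h) kVm invgK.
  have kG : [~ m, g] \in G := NG _ kN.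
  rewrite Sdef kN /=.
  have triv : commute m g -> [~ m, g] * [~ m, g] ^ c \in R.
    by move/commgP/eqP => ->; rewrite conj1g mulg1 group1.
  have kR1 : [~ m, g] ^ c = [~ m, g]^-1 -> [~ m, g] * [~ m, g] ^ c \in R.
    by move=> ->; rewrite mulgV group1.
  have kR2 : [~ m, g] ^ c = [~ m, g] -> [~ m, g] \in R ->
      [~ m, g] * [~ m, g] ^ c \in R.
    by move=> -> kR; rewrite groupM.
  have kCc : [~ m, g] ^ c = [~ m, g] -> [~ m, g] \in 'C_G[c].
    by move=> E; rewrite inC kG E eqxx.
  move: mU gU; rewrite !in_setU => /orP[/orP[mA|mB]|mC] /orP[/orP[gA|gB]|gC].
  - by apply: triv; exact: (centsP abA).
  - have kc : [~ m, g] ^ c = [~ m, g] by rewrite conjRg invAc // invBc.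
    apply: kR2 => //.
    have h := star_comm T mA gB; rewrite -invgR !groupV in h.
    by apply: h => //; exact: kCc.
  - by apply: kR1; rewrite conjRg invAc // fixC.
  - have kc : [~ m, g] ^ c = [~ m, g] by rewrite conjRg invBc // invAc.
    by apply: kR2 => //; apply: star_comm T gA mB _ kZ; exact: kCc.
  - by apply: triv; exact: (centsP abB).
  - by apply: kR1; rewrite conjRg invBc // fixC.
  - by apply: kR1; rewrite conjRg fixC // invAc.
  - by apply: kR1; rewrite conjRg fixC // invBc.
  - by apply: triv; exact: (centsP abC).
have SN x y : x \in S -> y \in G -> x ^ y = x.
  move=> xS yG; apply: cfix; apply/cent1P; apply: NC yG.
  by move: xS; rewrite Sdef => /andP[].
have TmG m : m \in M -> m \in 'C_G[a] :|: 'C_G[b] :|: 'C_G[c] ->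
    G \subset [set g in G | [~ m, g] \in S].
  move=> mM mU.
  have gT' : group_set [set g in G | [~ m, g] \in S].
    apply/group_setP; split; first by rewrite inE group1 commg1 S1.
    move=> x y; rewrite !inE => /andP[xG xS] /andP[yG yS].
    by rewrite groupM //= commgMJ SN // SM.
  apply: subset_trans (trip_gen T (subxx G) naG nbG) _.
  rewrite (gen_subG _ (Group gT')); apply/subsetP => g gU.
  rewrite inE piece // andbT.
  by move: gU; rewrite !in_setU => /orP[/orP[]|]; apply: CinG.
have gU : group_set [set m in M | G \subset [set g in G | [~ m, g] \in S]].
  apply/group_setP; split.
    rewrite inE group1 /=; apply/subsetP => g gG.
    by rewrite inE gG comm1g S1.
  move=> x y; rewrite !inE => /andP[xM /subsetP xS] /andP[yM /subsetP yS].
  rewrite groupM //=; apply/subsetP => g gG.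
  have := xS g gG; have := yS g gG; rewrite !inE gG /= => ygS xgS.
  by rewrite commMgJ SN ?(subsetP sMG) // SM.
have sMU : M \subset [set m in M | G \subset [set g in G | [~ m, g] \in S]].
  apply: subset_trans (trip_gen T sMG naM nbM) _.
  rewrite (gen_subG _ (Group gU)); apply/subsetP => m mU.
  have mM : m \in M by move: mU; rewrite !in_setU => /orP[/orP[]|]; apply: CinG.
  rewrite inE mM /=; apply: TmG => //.
  by move: mU; rewrite !in_setU !inC (subsetP sMG m mM) mM.
have sNS : N \subset S.
  rewrite defN; change ([~: M, G] \subset SG); rewrite /commutator gen_subG; apply/subsetP => _ /imset2P[m g mM gG ->].
  have h := subsetP sMU m mM; rewrite inE mM /= in h.
  by have := subsetP h g gG; rewrite inE gG.
apply/subsetP => n /setIP[nN nC].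
have := subsetP sNS n nN; rewrite Sdef nN fixC //= -expg2 => n2R.
by rewrite -(sqrtE' oG (NG _ nN)) groupX.
Qed.

End Basic.

Section Quot.
Variable gT : finGroupType.
Variables (G K : {group gT}) (a b c : gT).
Hypotheses (T : trip G a b c) (sKG : K \subset G) (nKG : G \subset 'N(K)).
Hypotheses (naK : a \in 'N(K)) (nbK : b \in 'N(K)) (ncK : c \in 'N(K)).

Lemma cosetJ x y : x \in 'N(K) -> y \in 'N(K) -> coset K (x ^ y) = coset K x ^ coset K y.
Proof. by move=> xN yN; rewrite morphJ. Qed.

Lemma q_cent_sub : 'C_(G / K)[coset K a] \subset 'C_G[a] / K.
Proof.
have T' := T; case: T' => oG /and3P[naG nbG ncG] _ [a2 b2 c2] _.
apply/subsetP => y; rewrite inC => /andP[/morphimP[x xN xG ->] /eqP].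
rewrite -cosetJ // => E.
have pK : x ^ a * x^-1 \in K.
  apply: coset_idr; first by rewrite groupM ?groupV ?groupJ.
  rewrite morphM ?groupV ?groupJ //; change (coset K (x ^ a) * coset K x^-1 = 1).
  by rewrite E morphV // mulgV.
have ccC := fixdec oG (subxx G) naG a2 xG.
change (coset K x \in 'C_G[a] / K).
have qK : (x ^ a * x^-1) ^+ ee G \in K by rewrite groupX.
have -> : coset K x = coset K ((x ^ a * x^-1) ^+ ee G * x).
  rewrite morphM //; last by apply: (subsetP (subset_trans sKG nKG)).
  by change (coset K x = coset K ((x ^ a * x^-1) ^+ ee G) * coset K x); rewrite (coset_id qK) mul1g.
by apply: mem_quotient.
Qed.

Lemma q_cent_sup : 'C_G[a] / K \subset 'C_(G / K)[coset K a].
Proof.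
apply/subsetP => _ /morphimP[x xN xC ->]; change (coset K x \in 'C_(G / K)[coset K a]).
rewrite inC mem_quotient ?(CinG xC) //= -cosetJ //.
by move: xC; rewrite inC => /andP[_ /eqP ->].
Qed.

Lemma q_cent : 'C_(G / K)[coset K a] = 'C_G[a] / K.
Proof. by apply/eqP; rewrite eqEsubset q_cent_sub q_cent_sup. Qed.

Lemma q_int : 'C_(G / K)[coset K a] :&: 'C_(G / K)[coset K b] = 1.
Proof.
have oG := trip_odd T.
apply/trivgP/subsetP => y /setIP[yA yB].
have := subsetP q_cent_sub y yA => /morphimP[x xN xC Ey].
move: yB; rewrite Ey inC => /andP[_ /eqP E0].
have E : coset K (x ^ b) = coset K x by rewrite cosetJ.
rewrite (trip_inv T xC) in E.
have x2K : x ^+ 2 \in K.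
  apply: coset_idr; first by rewrite groupX.
  rewrite morphX //; change (coset K x ^+ 2 = 1).
  by rewrite expg2 -{1}E morphV // mulVg.
have xK : x \in K by rewrite -(sqrtE' oG (CinG xC)) groupX.
by rewrite inE; change (coset K x == 1); rewrite coset_id.
Qed.

End Quot.

Lemma trip_quot (gT : finGroupType) (G K : {group gT}) a b c : trip G a b c ->
  K \subset G -> G \subset 'N(K) -> a \in 'N(K) -> b \in 'N(K) -> c \in 'N(K) ->
  trip (G / K) (coset K a) (coset K b) (coset K c).
Proof.
move=> T sKG nKG naK nbK ncK.
have T' := T; case: T' => oG /and3P[naG nbG ncG] [[ab ba ac] [ca bc cb]] [a2 b2 c2] _.
have qn x : x \in 'N(K) -> x \in 'N(G) -> coset K x \in 'N(G / K).
  move=> xK xG; have := quotient_norms K (A := [set x]) (B := G).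
  by rewrite quotient_set1 // !sub1set => ->.
split.
- by apply: dvdn_odd oG; rewrite card_quotient // dvdn_indexg.
- by rewrite !qn.
- by split; split; rewrite -morphM // ?ab ?ba ?ac ?ca ?bc ?cb.
- by split; rewrite -morphX // ?a2 ?b2 ?c2 morph1.
split.
- exact: q_int T sKG nKG naK nbK.
- exact: q_int (trip_acb T) sKG nKG naK ncK.
- exact: q_int (trip_acb (trip_ba T)) sKG nKG nbK ncK.
Qed.

Section Rest.
Variable gT : finGroupType.
Implicit Types (G K : {group gT}) (a b c x y : gT).

Lemma nK_of G K x : K \char G -> x \in 'N(G) -> x \in 'N(K).
Proof. by move=> chK xN; rewrite -sub1set (char_norm_trans chK) // sub1set. Qed.

Lemma star_der G a b c x y : trip G a b c -> x \in 'C_G[a] -> y \in 'C_G[b] ->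
  star 'C_G[c] 'C_G[b] x y \in G^`(1).
Proof.
move=> T xC yC; rewrite /star; case: pickP => [s | _] /=; last by rewrite group1.
case/andP => sC /existsP[t /andP[tC /eqP E]].
have T' := T; case: T' => oG /and3P[naG nbG ncG] _ _ _.
set K := G^`(1).
have chK : K \char G := der_char 1 G.
have sKG : K \subset G := der_sub 1 G.
have nKG : G \subset 'N(K) := der_norm 1 G.
have nG z : z \in G -> z \in 'N(K) by move/(subsetP nKG).
have sG := CinG sC; have tG := CinG tC; have xG := CinG xC; have yG := CinG yC.
have abQ : abelian (G / K) by apply: sub_der1_abelian.
have cQ u v : u \in G -> v \in G -> coset K u * coset K v = coset K v * coset K u.
  move=> uG vG; apply: (centsP abQ); exact: mem_quotient.
have E1 : coset K s ^+ 2 * coset K t = coset K y.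
  have E0 : coset K (y ^ x) = coset K (s * t * s) by rewrite E.
  have E3 : coset K y ^ coset K x = coset K s * coset K t * coset K s.
    by rewrite -cosetJ ?nG // E0 !morphM ?groupM ?nG.
  rewrite conjgE (cQ y x) // mulKg in E3.
  by rewrite E3 expg2 -!mulgA (cQ t s).
have E2 : coset K (s ^+ 2) = coset K (y * t^-1).
  have m1 : coset K (s ^+ 2) = coset K s ^+ 2 := morphX _ 2 (nG _ sG).
  have m2 : coset K (y * t^-1) = coset K y * coset K (t^-1).
    by rewrite morphM ?groupV ?nG.
  have m3 : coset K (t^-1) = (coset K t)^-1 := morphV _ (nG _ tG).
  by rewrite m1 m2 m3 -E1 mulgK.
have TQ := trip_quot T sKG nKG (nK_of chK naG) (nK_of chK nbG) (nK_of chK ncG).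
have zb : coset K (s ^+ 2) \in 'C_(G / K)[coset K b].
  rewrite (q_cent (trip_ba T)) ?(nK_of chK nbG) // E2 mem_quotient //.
  by rewrite groupM ?groupV.
have zc : coset K (s ^+ 2) \in 'C_(G / K)[coset K c].
  rewrite (q_cent (trip_ba (trip_acb T))) ?(nK_of chK ncG) // mem_quotient //.
  by rewrite groupX.
have z1 : coset K (s ^+ 2) \in 'C_(G / K)[coset K b] :&: 'C_(G / K)[coset K c].
  by rewrite inE zb zc.
move: z1; rewrite (q_int (trip_acb (trip_ba T))) ?(nK_of chK ncG) ?(nK_of chK nbG) //.
rewrite inE => /eqP z1.
have s2K : s ^+ 2 \in K by apply: coset_idr; rewrite ?groupX ?nG.
by rewrite -(sqrtE' oG sG) groupX.
Qed.

Lemma R_sub G a b c : trip G a b c ->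
  starGen 'C_G[a] 'C_G[b] 'C_G[c] \subset 'C_G[c] :&: G^`(1).
Proof.
move=> T; rewrite /starGen gen_subG; apply/subsetP => _ /imset2P[x y xC yC ->].
by rewrite inE star_in (star_der T).
Qed.

Lemma R_quot G K a b c : trip G a b c -> K \subset G -> G \subset 'N(K) ->
  a \in 'N(K) -> b \in 'N(K) -> c \in 'N(K) ->
  starGen 'C_(G / K)[coset K a] 'C_(G / K)[coset K b] 'C_(G / K)[coset K c]
   \subset starGen 'C_G[a] 'C_G[b] 'C_G[c] / K.
Proof.
move=> T sKG nKG naK nbK ncK.
have T' := T; case: T' => oG /and3P[naG nbG ncG] _ _ _.
have TQ := trip_quot T sKG nKG naK nbK ncK.
set R := starGen 'C_G[a] 'C_G[b] 'C_G[c].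
rewrite {1}/starGen gen_subG.
apply/subsetP => _ /imset2P[x' y' x'C y'C ->].
rewrite (q_cent T) // in x'C; rewrite (q_cent (trip_ba T)) // in y'C.
case/morphimP: x'C => x xN xC ->; case/morphimP: y'C => y yN yC ->.
change (star 'C_(G / K)[coset K c] 'C_(G / K)[coset K b] (coset K x) (coset K y)
   \in R / K).
have xa : x ^ a = x by move: xC; rewrite inC => /andP[_ /eqP].
have ya : y ^ a = y^-1 := trip_inv (trip_ba T) yC.
have wa : (y ^ x) ^ a = (y ^ x)^-1 by rewrite conjJg xa ya conjVg.
have wG : y ^ x \in G by rewrite groupJ ?(CinG xC) ?(CinG yC).
have [s sC [t tC E]] := trip_exist T (subxx G) naG nbG wG wa.
have st := star_eq T sC tC E.
have sR : s \in R by rewrite -st; apply: mem_gen; apply: imset2_f.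
have nG z : z \in G -> z \in 'N(K) by move/(subsetP nKG).
have EQ : coset K y ^ coset K x = coset K s * coset K t * coset K s.
  by rewrite -cosetJ ?nG ?(CinG xC) ?(CinG yC) // E !morphM ?groupM ?nG ?(CinG sC) ?(CinG tC).
rewrite (star_eq TQ _ _ EQ).
- by apply: mem_quotient.
- by rewrite (q_cent (trip_ba (trip_acb T))) // mem_quotient.
- by rewrite (q_cent (trip_ba T)) // mem_quotient.
Qed.

End Rest.

Lemma main_ind n : forall (gT : finGroupType) (G : {group gT}) (a b c : gT),
  #|G| <= n -> trip G a b c -> nilpotent G ->
  'C_G[c] :&: G^`(1) \subset starGen 'C_G[a] 'C_G[b] 'C_G[c].
Proof.
elim: n => [|n IH] gT G a b c leG T nilG.
  by move: (cardG_gt0 G); rewrite ltnNge leG.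
have T' := T; case: T' => oG /and3P[naG nbG ncG] _ _ _.
have [abG | nabG] := boolP (abelian G).
  by rewrite (derG1P abG) setIg1 sub1G.
case Ecl: (nil_class G) => [|[|m]].
- by move: nabG; rewrite -nil_class1 Ecl.
- by move: nabG; rewrite -nil_class1 Ecl.
have defN : 'L_m.+2(G) = [~: 'L_m.+1(G), G] := lcnSn m G.
have N3 : 'L_m.+3(G) = 1 by apply/(lcn_nil_classP m.+2 nilG); rewrite Ecl.
have cNG : 'L_m.+2(G) \subset 'C(G) by apply/commG1P; rewrite -lcnSn.
have Nn1 : 'L_m.+2(G) != 1.
  apply/eqP => N1; have : nil_class G <= m.+1 by apply/(lcn_nil_classP m.+1 nilG).
  by rewrite Ecl ltnn.
have sND : 'L_m.+2(G) \subset G^`(1).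
  by rewrite derg1 -{2}(lcn1 G) -lcnSn lcn_sub_leq.
have chN : 'L_m.+2(G) \char G := lcn_char _ _.
have chM : 'L_m.+1(G) \char G := lcn_char _ _.
have sNG : 'L_m.+2(G) \subset G := lcn_sub _ _.
have nNG : G \subset 'N('L_m.+2(G)) := lcn_norm _ _.
have naN := nK_of chN naG; have nbN := nK_of chN nbG; have ncN := nK_of chN ncG.
have leq : #|G / 'L_m.+2(G)| <= n.
  by rewrite -ltnS; apply: leq_trans leG; apply: ltn_quotient.
have IHq := IH _ _ _ _ _ leq (trip_quot T sNG nNG naN nbN ncN)
  (quotient_nil _ nilG).
have sQ := subset_trans IHq (R_quot T sNG nNG naN nbN ncN).
apply/subsetP => x /setIP[xC xD].
have xG := CinG xC.
have xN : x \in 'N('L_m.+2(G)) by apply: (subsetP nNG).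
have cx : coset 'L_m.+2(G) x \in 'C_(G / 'L_m.+2(G))[coset 'L_m.+2(G) c]
     :&: (G / 'L_m.+2(G))^`(1).
  rewrite inE (q_cent (trip_ba (trip_acb T))) // mem_quotient //=.
  by rewrite -quotient_der // mem_quotient.
case/morphimP: (subsetP sQ _ cx) => r rN rR Er.
have rC : r \in 'C_G[c] by case/setIP: (subsetP (R_sub T) r rR).
have n0N : x * r^-1 \in 'L_m.+2(G).
  apply: coset_idr; first by rewrite groupM ?groupV.
  rewrite morphM ?groupV // morphV //.
  change (coset 'L_m.+2(G) x * (coset 'L_m.+2(G) r)^-1 = 1).
  by rewrite Er mulgV.
have n0C : x * r^-1 \in 'C_G[c] by rewrite groupM ?groupV.
have n0I : x * r^-1 \in 'L_m.+2(G) :&: 'C_G[c] by rewrite in_setI n0N n0C.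
have n0R := subsetP (trip_base T (lcn_sub _ G) (nK_of chM naG) (nK_of chM nbG) defN cNG)
  _ n0I.
by rewrite -(mulgKV r x) groupM.
Qed.

Lemma sum3_4 (x y z : bool) : (x + (y + (z + 1)) = 4)%N -> [&& x, y & z].
Proof. by case: x; case: y; case: z. Qed.

Lemma invol (gT : finGroupType) (x : gT) : x ^+ 2 = 1 -> x^-1 = x.
Proof. by move=> h; apply: (mulgI x); rewrite mulgV -expg2 h. Qed.

Theorem lemma4p7 (gT : finGroupType) (G V : {group gT}) (v1 v2 v3 : gT) :
  nilpotent G ->
  V \subset 'N(G) ->
  (V : {set gT}) = [set 1; v1; v2; v3] ->
  #|V| = 4 ->
  v1 ^+ 2 = 1 -> v2 ^+ 2 = 1 -> v3 ^+ 2 = 1 ->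
  'C_G(V) = 1 ->
  [/\ 'C_G[v1] :&: G^`(1) = starGen 'C_G[v2] 'C_G[v3] 'C_G[v1],
      'C_G[v2] :&: G^`(1) = starGen 'C_G[v1] 'C_G[v3] 'C_G[v2]
    & 'C_G[v3] :&: G^`(1) = starGen 'C_G[v1] 'C_G[v2] 'C_G[v3]].
Proof.
move=> nilG nGV hV cardV h1 h2 h3 CGV.
have inV x : x \in [:: v1; v2; v3] -> x \in V.
  by rewrite hV !inE => /or3P[] ->; rewrite ?orbT.
have v1V : v1 \in V by apply: inV; rewrite !inE eqxx.
have v2V : v2 \in V by apply: inV; rewrite !inE eqxx orbT.
have v3V : v3 \in V by apply: inV; rewrite !inE eqxx !orbT.
have /and3P[d3 d2 d1] : [&& v3 \notin [set 1; v1; v2], v2 \notin [set 1; v1]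
    & v1 \notin [set 1]].
  apply: sum3_4; move: cardV; rewrite hV (setUC _ [set v3]) cardsU1.
  by rewrite (setUC _ [set v2]) cardsU1 (setUC _ [set v1]) cardsU1 cards1.
move: d3 d2 d1; rewrite !inE !negb_or => /andP[/andP[n31 n32] n33] /andP[n21 n22] n11.
have e12 : v1 * v2 = v3.
  have : v1 * v2 \in V by rewrite groupM.
  rewrite hV !inE => /orP[/orP[/orP[]|]|] /eqP E.
  - by move: n22; rewrite -(mulKg v1 v2) E mulg1 (invol h1) eqxx.
  - by move: n21; rewrite -(mulKg v1 v2) E mulVg eqxx.
  - by move: n11; rewrite -(mulgK v2 v1) E mulgV eqxx.
  - exact: E.
have e21 : v2 * v1 = v3.
  by rewrite -(invol h3) -e12 invMg (invol h1) (invol h2).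
have e13 : v1 * v3 = v2 by rewrite -e12 mulgA -expg2 h1 mul1g.
have e31 : v3 * v1 = v2 by rewrite -e21 -mulgA -expg2 h1 mulg1.
have e23 : v2 * v3 = v1 by rewrite -e21 mulgA -expg2 h2 mul1g.
have e32 : v3 * v2 = v1 by rewrite -e12 -mulgA -expg2 h2 mulg1.
have nG x : x \in V -> x \in 'N(G) by move/(subsetP nGV).
have H0 x : x \in G -> commute x v1 -> commute x v2 -> x = 1.
  move=> xG c1 c2.
  have c3 : commute x v3 by rewrite -e12; apply: commuteM.
  have : x \in 'C_G(V).
    rewrite inE xG /=; apply/centP => y; rewrite hV !inE => /orP[/orP[/orP[]|]|] /eqP ->.
    - exact: commute1.
    - exact: c1.
    - exact: c2.
    - exact: c3.
  by rewrite CGV inE => /eqP.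
have CI (a b : gT) : (forall x, x \in G -> commute x a -> commute x b -> x = 1) ->
    'C_G[a] :&: 'C_G[b] = 1.
  move=> H; apply/trivgP/subsetP => x /setIP[/subcent1P[xG ca] /subcent1P[_ cb]].
  by rewrite inE (H x xG (esym ca) (esym cb)).
have oG : odd #|G|.
  set P := 'O_2(G).
  have hall := nilpotent_pcore_Hall 2 nilG.
  have P1 : P = 1.
    apply/eqP; apply: contraT => Pn1.
    have nPV : V \subset 'N(P) := char_norm_trans (pcore_char 2 G) nGV.
    have WE := norm_joinEr nPV.
    have pW : 2.-group (P <*> V).
      by rewrite WE pgroupM pcore_pgroup /pgroup cardV.
    have nPW : P <| P <*> V by rewrite normalYl.
    case/trivgPn: (meet_center_nil (pgroup_nil pW) nPW Pn1) => x /setIP[xP /setIP[_ xC]] xn1.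
    have xG : x \in G := subsetP (pcore_sub 2 G) x xP.
    have : x \in 'C_G(V).
      by rewrite inE xG; apply: (subsetP (centS (joing_subr P V))).
    by rewrite CGV inE (negbTE xn1).
  move: hall; rewrite -/P P1 /pHall => /and3P[_ _].
  by rewrite indexg1 p'natE // dvdn2 negbK.
have T0 : trip G v1 v2 v3.
  split => //.
  - by rewrite !nG.
  - split.
    + by apply: CI => x xG ca cb; apply: H0.
    + by apply: CI => x xG ca cb; apply: H0 => //; rewrite -e13; exact: commuteM.
    + by apply: CI => x xG ca cb; apply: H0 => //; rewrite -e23; exact: commuteM.
have eqR G0 a b c : trip G0 a b c -> nilpotent G0 ->
    'C_G0[c] :&: G0^`(1) = starGen 'C_G0[a] 'C_G0[b] 'C_G0[c].
  move=> T nil0; apply/eqP; rewrite eqEsubset (R_sub T) andbT.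
  exact: (main_ind (leqnn _) T nil0).
split.
- exact: eqR (trip_acb (trip_ba T0)) nilG.
- exact: eqR (trip_acb T0) nilG.
- exact: eqR T0 nilG.
Qed.
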